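(* Let $\kappa$ be an uncountable regular cardinal, let $\mathcal{I}$ be a $\kappa$-complete proper ideal on $\kappa$ containing every bounded subset of $\kappa$, and let $\nu\in\{2,\kappa\}$. Consider ${}^{\kappa}\nu$ with the topology $\tau_{\mathcal{I}}$. Then: (1) $\tau_{\mathcal{I}}$ is perfect (no isolated points), regular Hausdorff, and zero-dimensional (has a basis of clopen sets). (2) For any ordinal $\alpha$: the intersection of every sequence $\langle U_\beta:\beta<\alpha\rangle$ of $\tau_{\mathcal{I}}$-open sets is $\tau_{\mathcal{I}}$-open if and only if $\alpha<\kappa$. Consequently, the family of $\tau_{\mathcal{I}}$-clopen subsets of ${}^{\kappa}\nu$ is closed under complements and under unions of fewer than $\kappa$ sets. (3) For every $x\in{}^{\kappa}\nu$, every $\tau_{\mathcal{I}}$-open neighborhood basis of $x$ has size at least $\kappa$. Moreover, every point has a $\tau_{\mathcal{I}}$-open neighborhood basis of size $\kappa$ if and only if $\mathcal{I}$ has a basis of size $\kappa$. If moreover $\mathcal{I}$ contains an unbounded subset of $\kappa$, then: (4) $\tau_{\mathcal{I}}$ is neither compact nor $\kappa$-compact; (5) $\tau_{\mathcal{I}}$ has weight $2^\kappa$, and $|\tau_{\mathcal{I}}|=2^{2^\kappa}$; (6) $\tau_{\mathcal{I}}$ has density character $2^\kappa$.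
   Context: ${}^{\kappa}\nu$ is the set of functions $\kappa\to\nu$. For $f\colon D\to\nu$ with $D\in\mathcal{I}$, $\mathbf{N}_f=\{x\in{}^{\kappa}\nu:f\subseteq x\}$; $\tau_{\mathcal{I}}$ is the topology generated by these sets. A basis for $\mathcal{I}$ is a family $\mathcal{B}\subseteq\mathcal{I}$ such that each member of $\mathcal{I}$ is contained in a member of $\mathcal{B}$. A space is $\kappa$-compact if every open cover has a subcover of size less than $\kappa$. Weight is the least size of an open basis; density character is the least size of a dense subset. *)

(* Defs.v *)
From mathcomp Require Import all_boot.
From mathcomp Require Import boolp classical_sets cardinality.
Set Implicit Arguments. Unset Strict Implicit. Unset Printing Implicit Defensive.
Local Open Scope classical_set_scope.
Local Open Scope card_scope.

Section Kappa.
Variables (K : Type) (lt : K -> K -> Prop).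

Definition strict_well_order : Prop :=
  (forall i, ~ lt i i) /\
  (forall i j k, lt i j -> lt j k -> lt i k) /\
  (forall i j, lt i j \/ i = j \/ lt j i) /\
  well_founded lt.

(* "a set of size less than kappa", kappa = |K| *)
Definition small (T : Type) (A : set T) : Prop := ~ ([set: K] #<= A).

Definition initial_ordinal : Prop :=
  strict_well_order /\ forall i, small [set j | lt j i].

Definition bounded (A : set K) : Prop := exists i, forall a, A a -> lt a i.

Definition regular : Prop := forall A : set K, small A -> bounded A.

Definition uncountable_card : Prop := ~ countable [set: K].

Definition uncountable_regular_cardinal : Prop :=
  initial_ordinal /\ regular /\ uncountable_card.

Definition ideal (I : set (set K)) : Prop :=
  I set0 /\
  (forall A B, I B -> A `<=` B -> I A) /\
  (forall A B, I A -> I B -> I (A `|` B)).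

Definition proper_ideal (I : set (set K)) : Prop := ideal I /\ ~ I [set: K].

Definition kappa_complete (I : set (set K)) : Prop :=
  forall F : set (set K), small F -> F `<=` I -> I (\bigcup_(A in F) A).

Definition contains_bounded (I : set (set K)) : Prop :=
  forall A, bounded A -> I A.

Definition ideal_basis (I B : set (set K)) : Prop :=
  B `<=` I /\ forall A, I A -> exists2 C, B C & A `<=` C.

Variable V : Type.
Variable I : set (set K).

(* N_f for f : D -> nu, D in I; f is given by its domain D and a total
   function g agreeing with f on D *)
Definition basic_open (D : set K) (g : K -> V) : set (K -> V) :=
  [set x | forall k, D k -> x k = g k].

Definition subbase : set (set (K -> V)) :=
  [set N | exists D g, I D /\ N = basic_open D g].

(* the topology generated by the sets N_f: the smallest family containing
   them that is closed under finite intersections and arbitrary unions *)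
Definition is_topology (T : set (set (K -> V))) : Prop :=
  T [set: K -> V] /\
  (forall U W, T U -> T W -> T (U `&` W)) /\
  (forall F, F `<=` T -> T (\bigcup_(U in F) U)).

Definition open (U : set (K -> V)) : Prop :=
  forall T, is_topology T -> subbase `<=` T -> T U.

Definition closed (C : set (K -> V)) : Prop := open (~` C).
Definition clopen (U : set (K -> V)) : Prop := open U /\ closed U.

Definition perfect : Prop := forall x, ~ open [set x].

Definition hausdorff : Prop :=
  forall x y, x <> y -> exists U W, [/\ open U, open W, U x, W y & U `&` W = set0].

Definition regular_space : Prop :=
  forall x C, closed C -> ~ C x ->
    exists U W, [/\ open U, open W, U x, C `<=` W & U `&` W = set0].

Definition zero_dimensional : Prop :=
  forall U x, open U -> U x -> exists W, [/\ clopen W, W x & W `<=` U].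

Definition nbhd_basis (x : K -> V) (B : set (set (K -> V))) : Prop :=
  (forall W, B W -> open W /\ W x) /\
  (forall U, open U -> U x -> exists2 W, B W & W `<=` U).

Definition open_basis (B : set (set (K -> V))) : Prop :=
  B `<=` open /\
  (forall U x, open U -> U x -> exists2 W, B W & W x /\ W `<=` U).

Definition open_cover (F : set (set (K -> V))) : Prop :=
  F `<=` open /\ \bigcup_(U in F) U = [set: K -> V].

Definition compact_space : Prop :=
  forall F, open_cover F ->
    exists2 G, G `<=` F & finite_set G /\ \bigcup_(U in G) U = [set: K -> V].

Definition kappa_compact : Prop :=
  forall F, open_cover F ->
    exists2 G, G `<=` F & small G /\ \bigcup_(U in G) U = [set: K -> V].

Definition dense (D : set (K -> V)) : Prop :=
  forall U, open U -> U !=set0 -> U `&` D !=set0.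

End Kappa.

(* Main.v *)
Require Import Defs.
From mathcomp Require Import all_boot.
From mathcomp Require Import boolp classical_sets functions cardinality.
Set Implicit Arguments. Unset Strict Implicit. Unset Printing Implicit Defensive.
Local Open Scope classical_set_scope.
Local Open Scope card_scope.

Lemma le_of_inj {T U} (A : set T) (B : set U) (f : T -> U) :
  (forall x, A x -> B (f x)) ->
  (forall x y, A x -> A y -> f x = f y -> x = y) -> A #<= B.
Proof.
move=> fAB finj.
have [g] : $|{injfun A >-> B}|.
  apply/injfunPex; exists f; first by move=> x /fAB.
  by move=> x y; rewrite !inE => Ax Ay; apply: finj.
exact: inj_card_le.
Qed.

Lemma inj_of_le {T U} (A : set T) (B : set U) : A #<= B -> (exists x, A x) ->
  exists f : T -> U, (forall x, A x -> B (f x)) /\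
    (forall x y, A x -> A y -> f x = f y -> x = y).
Proof.
elim/Ppointed: U => U in B *.
  rewrite !emptyE_subdef => -> [x []].
move=> /pcard_leP [f] _; exists f; split.
  by move=> x Ax; apply: 'funS_f.
by move=> x y Ax Ay; apply: 'inj_f; rewrite inE.
Qed.

Lemma le_of_empty {T U} (A : set T) (B : set U) : ~ (exists x, A x) -> A #<= B.
Proof.
move=> nA; have -> : A = set0.
  by apply/seteqP; split=> x // Ax; exfalso; apply: nA; exists x.
exact: card_ge0.
Qed.

Lemma card_le_setT {X Y} : [set: X] #<= [set: Y] -> [set: set X] #<= [set: set Y].
Proof.
move=> XY.
case: (pselect (exists x : X, True)) => [[x0 _]|nX].
- have [f [_ finj]] := inj_of_le XY (ex_intro _ x0 Logic.I).
  apply: (@le_of_inj _ _ _ _ (fun S => f @` S)) => // S T _ _ eqST.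
  apply/seteqP; split => x Sx.
  + have : (f @` T) (f x) by rewrite -eqST; exists x.
    by case=> y Ty /(finj y x Logic.I Logic.I) <-.
  + have : (f @` S) (f x) by rewrite eqST; exists x.
    by case=> y Ty /(finj y x Logic.I Logic.I) <-.
- apply: (@le_of_inj _ _ _ _ (fun _ => set0)) => // S T _ _ _.
  by apply/seteqP; split => x; exfalso; apply nX; exists x.
Qed.

Lemma card_leX {A A' B B'} : [set: A] #<= [set: A'] -> [set: B] #<= [set: B'] ->
  [set: A * B] #<= [set: A' * B'].
Proof.
move=> hA hB.
case: (pselect (exists a : A, True)) => [[a0 _]|nA]; last first.
  by apply: le_of_empty => -[p _]; apply: nA; exists p.1.
case: (pselect (exists b : B, True)) => [[b0 _]|nB]; last first.
  by apply: le_of_empty => -[p _]; apply: nB; exists p.2.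
have [f [_ finj]] := inj_of_le hA (ex_intro _ a0 Logic.I).
have [g [_ ginj]] := inj_of_le hB (ex_intro _ b0 Logic.I).
apply: (@le_of_inj _ _ _ _ (fun p => (f p.1, g p.2))) => // -[x1 x2] [y1 y2] _ _ /= [].
by move=> /(finj _ _ Logic.I Logic.I) -> /(ginj _ _ Logic.I Logic.I) ->.
Qed.

Lemma card_pair_set {X} : [set: set X * set X] #<= [set: set (X * bool)].
Proof.
apply: (@le_of_inj _ _ _ _ (fun ST : set X * set X =>
   [set p | (p.2 = true /\ ST.1 p.1) \/ (p.2 = false /\ ST.2 p.1)])) => //.
move=> [S1 S2] [T1 T2] _ _ /= /seteqP [E1 E2].
congr (_, _); apply/seteqP; split=> x h.
- by have [[_ //]|[//]] := E1 (x, true) (or_introl (conj erefl h)).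
- by have [[_ //]|[//]] := E2 (x, true) (or_introl (conj erefl h)).
- by have [[//]|[_ //]] := E1 (x, false) (or_intror (conj erefl h)).
- by have [[//]|[_ //]] := E2 (x, false) (or_intror (conj erefl h)).
Qed.

Lemma plus1_le {T} (A : set T) (p : T) : infinite_set A -> (A `|` [set p]) #<= A.
Proof.
move=> Ainf.
case: (pselect (A p)) => Ap.
  by apply: subset_card_le => x [//|->].
have [e [eA einj]] := inj_of_le (proj1 (infiniteP A) Ainf) (ex_intro _ 0%N Logic.I).
have einj' n m : e n = e m -> n = m by apply: einj.
pose g x := if pselect (x = p) is left _ then e 0%N
  else if pselect (exists n, e n = x) is left h then e (projT1 (cid h)).+1 else x.
have gP x : (x = p /\ g x = e 0%N) \/
    (x <> p /\ exists n, e n = x /\ g x = e n.+1) \/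
    (x <> p /\ (forall n, e n <> x) /\ g x = x).
  rewrite /g; case: pselect => [xp|xp]; first by left.
  case: pselect => [h|h]; right; [left|right].
    by split=> //; case: (cid h) => n /= hn; exists n.
  by split=> //; split=> // n en; apply: h; exists n.
apply: (@le_of_inj _ _ _ _ g).
  move=> x Ax; have [[xp ->]|[[xp [n [<- ->]]]|[xp [_ ->]]]] := gP x.
  - exact: eA.
  - exact: eA.
  - by case: Ax.
move=> x y Ax Ay.
have [[xp ->]|[[xp [n [<- ->]]]|[xp [xn ->]]]] := gP x;
have [[yp ->]|[[yp [m [<- ->]]]|[yp [yn ->]]]] := gP y => //.
- by move=> _; rewrite xp yp.
- by move=> /einj'.
- by move=> h; exfalso; apply: (yn 0%N).
- by move=> /einj'.
- by move=> /einj' [->].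
- by move=> h; exfalso; apply: (yn n.+1).
- by move=> h; exfalso; apply: (xn 0%N); rewrite h.
- by move=> h; exfalso; apply: (xn m.+1); rewrite h.
Qed.

Lemma card_leXs {T T' U U'} (A : set T) (A' : set T') (B : set U) (B' : set U') :
  A #<= A' -> B #<= B' -> (A `*` B) #<= (A' `*` B').
Proof.
move=> hA hB.
case: (pselect (exists a, A a)) => [[a0 Aa0]|nA]; last first.
  by apply: le_of_empty => -[p [Ap _]]; apply: nA; exists p.1.
case: (pselect (exists b, B b)) => [[b0 Bb0]|nB]; last first.
  by apply: le_of_empty => -[p [_ Bp]]; apply: nB; exists p.2.
have [f [fA finj]] := inj_of_le hA (ex_intro _ a0 Aa0).
have [g [gB ginj]] := inj_of_le hB (ex_intro _ b0 Bb0).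
apply: (@le_of_inj _ _ _ _ (fun p => (f p.1, g p.2))).
  by move=> [x1 x2] [/= h1 h2]; split; [apply: fA|apply: gB].
move=> [x1 x2] [y1 y2] [/= hx1 hx2] [/= hy1 hy2] [].
by move=> /(finj _ _ hx1 hy1) -> /(ginj _ _ hx2 hy2) ->.
Qed.

Section Hess.
Variables (K : Type) (lt : K -> K -> Prop) (d : K).
Hypothesis wo : strict_well_order lt.

Let irr : forall i, ~ lt i i. Proof. by case: wo. Qed.
Let trans : forall i j k, lt i j -> lt j k -> lt i k. Proof. by case: wo => _ []. Qed.
Let tri : forall i j, lt i j \/ i = j \/ lt j i. Proof. by case: wo => _ [_ []]. Qed.
Let wf : well_founded lt. Proof. by case: wo => _ [_ []]. Qed.

Definition seg i := [set j | lt j i].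

Definition mx (p : K * K) : K := if pselect (lt p.1 p.2) is left _ then p.2 else p.1.

Definition gl (p q : K * K) : Prop :=
  lt (mx p) (mx q) \/ (mx p = mx q /\ (lt p.1 q.1 \/ (p.1 = q.1 /\ lt p.2 q.2))).

Definition segG w := [set v | gl v w].

Let le a b := lt a b \/ a = b.

Lemma mx_ge p : le p.1 (mx p) /\ le p.2 (mx p).
Proof.
rewrite /mx; case: pselect => h; first by split; [left|right].
split; first by right.
by have [//|[->|l]] := tri p.1 p.2; [right|left].
Qed.

Lemma mx_or p : mx p = p.1 \/ mx p = p.2.
Proof. by rewrite /mx; case: pselect; [right|left]. Qed.

Lemma le_lt_trans a b c : le a b -> lt b c -> lt a c.
Proof. by case=> [ab|->] //; apply: trans. Qed.

Lemma lt_le_trans a b c : lt a b -> le b c -> lt a c.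
Proof. by move=> ab [bc|<-] //; apply: trans bc. Qed.

Lemma gl_trans p q r : gl p q -> gl q r -> gl p r.
Proof.
move=> [h1|[e1 h1]] [h2|[e2 h2]].
- by left; apply: trans h2.
- by left; rewrite -e2.
- by left; rewrite e1.
- right; split; first by rewrite e1.
  case: h1 => [l1|[e1' l1]]; case: h2 => [l2|[e2' l2]].
  + by left; apply: trans l2.
  + by left; rewrite -e2'.
  + by left; rewrite e1'.
  + by right; split; [rewrite e1'|apply: trans l2].
Qed.

Lemma gl_irr p : ~ gl p p.
Proof. by case=> [/irr|[_ [/irr|[_ /irr]]]]. Qed.

Lemma gl_total p q : p <> q -> gl p q \/ gl q p.
Proof.
move=> npq.
have [h|[h|h]] := tri (mx p) (mx q); [by left; left| |by right; left].
have [h1|[h1|h1]] := tri p.1 q.1.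
- by left; right; split => //; left.
- have [h2|[h2|h2]] := tri p.2 q.2.
  + by left; right; split => //; right.
  + by exfalso; apply: npq; case: p q h1 h2 {h} => ? ? [] ? ? /= -> ->.
  + by right; right; split; [rewrite h|right].
- by right; right; split; [rewrite h|left].
Qed.

Lemma gl_wf : well_founded gl.
Proof.
suff H : forall m p, mx p = m -> Acc gl p by move=> p; apply: (H (mx p)).
elim/(well_founded_ind wf) => m IHm.
suff H : forall x y, mx (x, y) = m -> Acc gl (x, y) by move=> [x y]; apply: H.
elim/(well_founded_ind wf) => x IHx.
elim/(well_founded_ind wf) => y IHy hm.
constructor => -[x' y'] [h|[e [h|[/= e' h]]]].
- by apply: (IHm (mx (x', y'))) => //; rewrite -hm.
- by apply: (IHx x') => //; rewrite e.
- by rewrite e'; apply: IHy => //; rewrite -e' e.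
Qed.

Lemma segG_sub w v : gl v w -> le v.1 (mx w) /\ le v.2 (mx w).
Proof.
have [h1 h2] := mx_ge v.
have lvw : gl v w -> le (mx v) (mx w) by case=> [h|[e _]]; [left|right].
move=> /lvw [l|e].
  by split; [apply/or_introl/(le_lt_trans h1)|apply/or_introl/(le_lt_trans h2)].
by rewrite -e.
Qed.

Lemma wf_least (P : K -> Prop) : (exists k, P k) ->
  exists k, P k /\ forall j, P j -> ~ lt j k.
Proof.
move=> [k Pk]; move: k Pk; elim/(well_founded_ind wf) => k IH Pk.
case: (pselect (exists j, P j /\ lt j k)) => [[j [Pj ljk]]|h].
  exact: (IH j ljk Pj).
by exists k; split => // j Pj ljk; apply: h; exists j.
Qed.

Definition least (P : K -> Prop) : K :=
  if pselect (exists k, P k /\ forall j, P j -> ~ lt j k) is left h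
  then projT1 (cid h) else d.

Lemma least_spec P : (exists k, P k) -> P (least P) /\ forall j, P j -> ~ lt j (least P).
Proof.
move=> /wf_least h; rewrite /least; case: pselect => // h'.
by case: (cid h') => k /=.
Qed.

Definition Fg (w : K * K) (r : forall v, gl v w -> K) : K :=
  least (fun k => ~ exists v (h : gl v w), r v h = k).

Definition fg := Fix gl_wf (fun _ => K) Fg.

Lemma fg_eq w : fg w = least (~` (fg @` segG w)).
Proof.
rewrite /fg Fix_eq.
  rewrite /Fg; congr least; apply: funext => k; apply: propext; split.
    by move=> h [v hv e]; apply: h; exists v, hv.
  by move=> h [v [hv e]]; apply: h; exists v.
move=> w' r1 r2 e; rewrite /Fg; congr least; apply: funext => k; apply: propext.
by split=> h [v [hv e']]; apply: h; exists v, hv; rewrite ?e // -e.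
Qed.

Lemma G_lemma (M : set K) :
  (forall a b, M b -> lt a b -> M a) ->
  (forall w, M w.1 -> M w.2 -> ~ (M #<= segG w)) ->
  (M `*` M) #<= M.
Proof.
move=> Mdown Msmall.
have key : forall w, M w.1 -> M w.2 ->
    M (fg w) /\ (forall k, (fg @` segG w) k <-> lt k (fg w)).
  elim/(well_founded_ind gl_wf) => w IH Mw1 Mw2.
  have Mmx : M (mx w) by case: (mx_or w) => ->.
  have Mle a : le a (mx w) -> M a by case=> [/(Mdown _ _ Mmx)|->].
  have IH' v : gl v w -> M (fg v) /\ (forall k, (fg @` segG v) k <-> lt k (fg v)).
    by move=> hv; have [h1 h2] := segG_sub hv; apply: IH => //; apply: Mle.
  set D := fg @` segG w.
  have Ddown a b : D b -> lt a b -> D a.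
    move=> [v hv <-] /(proj2 (IH' v hv) a) [u hu <-].
    by exists u => //; apply: gl_trans hu hv.
  have DM a : D a -> M a by move=> [v hv <-]; case: (IH' v hv).
  have [e [Me De]] : exists e, M e /\ ~ D e.
    apply: contrapT => h; apply: (Msmall w Mw1 Mw2).
    apply: card_le_trans (card_image_le fg (segG w)).
    apply: subset_card_le => a Ma; apply: contrapT => Da; apply: h; by exists a.
  have [Pf Pmin] := least_spec (ex_intro (fun k => (~` D) k) e De).
  rewrite -fg_eq in Pf Pmin.
  split.
    have [h|[h|h]] := tri (fg w) e.
    - exact: Mdown Me h.
    - by rewrite h.
    - by exfalso; apply: (Pmin e De).
  move=> k; split.
    move=> Dk; have [h|[h|h]] := tri k (fg w) => //.
      by exfalso; apply: Pf; rewrite -h.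
    by exfalso; apply: Pf; apply: Ddown Dk h.
  by move=> h; apply: contrapT => nD; apply: (Pmin k nD).
apply: (@le_of_inj _ _ _ _ fg).
  by move=> [a b] [/= Ma Mb]; case: (key (a, b)).
move=> w w' [Mw1 Mw2] [Mw1' Mw2'] e.
apply: contrapT => nw.
have [h|h] := gl_total nw.
  have : (fg @` segG w') (fg w) by exists w.
  by move=> /(proj2 (key w' Mw1' Mw2')); rewrite e => /irr.
have : (fg @` segG w) (fg w') by exists w'.
by move=> /(proj2 (key w Mw1 Mw2)); rewrite e => /irr.
Qed.

Definition Pc c := finite_set (seg c) \/ (seg c `*` seg c) #<= seg c.

Lemma segG_bound w : Pc (mx w) ->
  finite_set (segG w) \/ (infinite_set (seg (mx w)) /\ segG w #<= seg (mx w)).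
Proof.
set c := mx w => Pcc.
have sub : segG w `<=` (seg c `|` [set c]) `*` (seg c `|` [set c]).
  move=> v /segG_sub [h1 h2]; split.
    by case: h1 => [l|->]; [left|right].
  by case: h2 => [l|->]; [left|right].
case: (pselect (finite_set (seg c))) => fin.
  left; apply: sub_finite_set sub _; apply: finite_setX; rewrite finite_setU;
  by split => //; exact: finite_set1.
right; split => //.
have sq : (seg c `*` seg c) #<= seg c by case: Pcc.
apply: card_le_trans (subset_card_le sub) _.
apply: card_le_trans sq.
by apply: card_leXs; exact: plus1_le.
Qed.

Lemma G_apply M : (forall a b, M b -> lt a b -> M a) -> infinite_set M ->
  (forall c, M c -> Pc c /\ ~ (M #<= seg c)) -> (M `*` M) #<= M.
Proof.
move=> down inf h; apply: G_lemma => // w Mw1 Mw2 hle.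
have Mc : M (mx w) by case: (mx_or w) => ->.
have [Pcc nle] := h _ Mc.
case: (segG_bound Pcc) => [fin|[_ le']].
  by apply: inf; apply: card_le_finite hle fin.
by apply: nle; apply: card_le_trans hle le'.
Qed.

Lemma Pc_all c : Pc c.
Proof.
elim/(well_founded_ind wf): c => m IH.
case: (pselect (finite_set (seg m))) => fin; first by left.
right.
case: (pselect (exists c, lt c m /\ seg m #<= seg c)) => [[c [cm hle]]|nex].
  case: (IH c cm) => [finc|sq].
    by exfalso; apply: fin; apply: card_le_finite hle finc.
  apply: card_le_trans (card_leXs hle hle) _.
  apply: card_le_trans sq _.
  by apply: subset_card_le => a /= ac; apply: trans ac cm.
apply: G_apply => //.
  by move=> a b /= bm ab; apply: trans ab bm.
move=> c /= cm; split; first exact: IH.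
by move=> hle; apply: nex; exists c.
Qed.

Hypothesis init : forall i, small K (seg i).
Hypothesis Kinf : infinite_set [set: K].

Lemma hessenberg : [set: K * K] #<= [set: K].
Proof.
apply: card_le_trans (G_apply (M := setT) _ Kinf _).
- by apply: subset_card_le.
- by [].
- by move=> c _; split; [exact: Pc_all| exact: init].
Qed.

End Hess.

Section Topo.
Variables (K : Type) (lt : K -> K -> Prop) (V : Type) (I : set (set K)).
Hypothesis Hk : uncountable_regular_cardinal lt.
Hypothesis HI : proper_ideal I.
Hypothesis Hc : kappa_complete I.
Hypothesis Hb : contains_bounded lt I.
Variables (v0 v1 : V).
Hypothesis v01 : v0 <> v1.

Let Kinf : infinite_set [set: K].
Proof. by case: Hk => _ [_ unc] fin; apply: unc; apply: finite_set_countable. Qed.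

Let I0 : I set0. Proof. by case: HI => -[]. Qed.
Let Isub A B : I B -> A `<=` B -> I A. Proof. by case: HI => -[_ [h _]] _; apply: h. Qed.
Let IU A B : I A -> I B -> I (A `|` B). Proof. by case: HI => -[_ [_ h]] _; apply: h. Qed.
Let Iprop : ~ I [set: K]. Proof. by case: HI. Qed.

Let Ismall A : small K A -> I A.
Proof. by move=> sA; apply: Hb; case: Hk => _ [reg _]; apply: reg. Qed.

Let Ising k : I [set k].
Proof.
apply: Ismall => le; apply: Kinf; apply: card_le_finite le _; exact: finite_set1.
Qed.

Lemma small_image {J} (S : set J) (D : J -> set K) : small K S -> small K (D @` S).
Proof. by move=> sS le; apply: sS; apply: card_le_trans le (card_image_le _ _). Qed.

Lemma Iunion_small {J} (S : set J) (D : J -> set K) : small K S ->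
  (forall j, S j -> I (D j)) -> I (\bigcup_(j in S) D j).
Proof.
move=> sS DI.
have -> : \bigcup_(j in S) D j = \bigcup_(A in D @` S) A.
  apply/seteqP; split=> k.
    by case=> j Sj Djk; exists (D j) => //; exists j.
  by case=> A [j Sj <-] Ak; exists j.
apply: Hc; first exact: small_image.
by move=> A [j Sj <-]; apply: DI.
Qed.

Local Notation N := (@basic_open K V).

Lemma N_self D (x : K -> V) : N D x x. Proof. by []. Qed.

Lemma N_eq D (x y : K -> V) : N D y x -> N D x = N D y.
Proof.
move=> h; apply/seteqP; split=> z hz k Dk; rewrite hz //; first exact: h.
by rewrite h.
Qed.

Lemma N_mono D E (x : K -> V) : D `<=` E -> N E x `<=` N D x.
Proof. by move=> DE z hz k Dk; apply: hz; apply: DE. Qed.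

Definition upd (x : K -> V) k v : K -> V :=
  fun j => if pselect (j = k) is left _ then v else x j.

Lemma upd_at x k v : upd x k v k = v.
Proof. by rewrite /upd; case: pselect. Qed.

Lemma upd_other x k v j : j <> k -> upd x k v j = x j.
Proof. by rewrite /upd; case: pselect. Qed.

Definition oth (v : V) : V := if pselect (v = v0) is left _ then v1 else v0.

Lemma oth_neq v : oth v <> v.
Proof. by rewrite /oth; case: pselect => [->|h] // /esym. Qed.

Lemma upd_N D x k : ~ D k -> N D x (upd x k (oth (x k))).
Proof. by move=> nDk j Dj; rewrite upd_other // => e; apply: nDk; rewrite -e. Qed.

Lemma N_sub_inv D A (x : K -> V) : N D x `<=` N A x -> A `<=` D.
Proof.
move=> h k Ak; apply: contrapT => nDk.
have := h _ (upd_N x nDk) k Ak.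
by rewrite upd_at; apply: oth_neq.
Qed.

Lemma open_char (U : set (K -> V)) :
  open I U <-> forall x, U x -> exists D, I D /\ N D x `<=` U.
Proof.
split.
  move=> oU; apply: (oU [set U | forall x, U x -> exists D, I D /\ N D x `<=` U]).
    split; [|split].
    - by move=> x _; exists set0.
    - move=> A B hA hB x [Ax Bx].
      have [D1 [ID1 s1]] := hA x Ax; have [D2 [ID2 s2]] := hB x Bx.
      exists (D1 `|` D2); split; first exact: IU.
      move=> z hz; split; [apply: s1|apply: s2]; apply: N_mono hz => k hk;
      by [left|right].
    - move=> F FT x [A FA Ax].
      have [D [ID s]] := FT A FA x Ax.
      by exists D; split => // z /s Az; exists A.
  move=> W [D [g [ID ->]]] x Nx; exists D; split => //.
  by rewrite (N_eq Nx).
move=> h T [_ [_ Tun]] sub.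
have -> : U = \bigcup_(W in [set W | (@subbase K V I) W /\ W `<=` U]) W.
  apply/seteqP; split=> x.
    move=> Ux; have [D [ID s]] := h x Ux.
    by exists (N D x) => //; split => //; exists D, x.
  by case=> W [_ WU] /WU.
by apply: Tun => W [/sub].
Qed.

Lemma open_N D g : I D -> open I (N D g).
Proof.
move=> ID; apply/open_char => x Nx; exists D; split => //.
by rewrite (N_eq Nx).
Qed.

Lemma exists_out D : I D -> exists k, ~ D k.
Proof.
move=> ID; apply: contrapT => h; apply: Iprop; apply: Isub ID _ => k _.
by apply: contrapT => nk; apply: h; exists k.
Qed.

Lemma perfect_ : perfect V I.
Proof.
move=> x /open_char h; have [D [ID s]] := h x erefl.
have [k nDk] := exists_out ID.
have := s _ (upd_N x nDk) => /(congr1 (fun z => z k)).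
by rewrite upd_at; apply: oth_neq.
Qed.

Lemma closed_N D g : I D -> Defs.closed I (N D g).
Proof.
move=> ID; apply/open_char => x nN.
have [k [Dk xk]] : exists k, D k /\ x k <> g k.
  apply: contrapT => h; apply: nN => k Dk; apply: contrapT => ne; apply: h.
  by exists k.
exists [set k]; split; first exact: Ising.
by move=> z hz Nz; apply: xk; rewrite -(hz k erefl); apply: Nz.
Qed.

Lemma hausdorff_ : hausdorff V I.
Proof.
move=> x y nxy.
have [k xk] : exists k, x k <> y k.
  by apply: contrapT => h; apply: nxy; apply: funext => k; apply: contrapT => ne; apply: h; exists k.
exists (N [set k] x), (N [set k] y); split => //; try exact: open_N.
by apply/seteqP; split => // z [h1 h2]; apply: xk; rewrite -(h1 k erefl) -(h2 k erefl).
Qed.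

Lemma regular_ : regular_space V I.
Proof.
move=> x C cC nCx.
have [D [ID s]] := proj1 (open_char _) cC x nCx.
exists (N D x), (~` N D x); split => //.
- exact: open_N.
- exact: closed_N.
- by move=> c Cc Nc; apply: (s c Nc).
- by apply/seteqP; split => // z [].
Qed.

Lemma zero_dim_ : zero_dimensional V I.
Proof.
move=> U x oU Ux.
have [D [ID s]] := proj1 (open_char _) oU x Ux.
exists (N D x); split => //; split; [exact: open_N|exact: closed_N].
Qed.

Lemma bigcap_open {J} (S : set J) (U : J -> set (K -> V)) : small K S ->
  (forall j, S j -> open I (U j)) -> open I (\bigcap_(j in S) U j).
Proof.
move=> sS oU; apply/open_char => x hx.
have hD : forall j, exists D, S j -> I D /\ N D x `<=` U j.
  move=> j; case: (pselect (S j)) => Sj; last by exists set0.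
  by have [D hD] := proj1 (open_char _) (oU j Sj) x (hx j Sj); exists D.
have [Dj hDj] := choice hD.
exists (\bigcup_(j in S) Dj j); split.
  by apply: Iunion_small => // j Sj; case: (hDj j Sj).
move=> z hz j Sj; have [_ s] := hDj j Sj; apply: s; apply: N_mono hz.
by move=> k Dk; exists j.
Qed.

Lemma part2 (J : Type) :
  (forall U : J -> set (K -> V), (forall j, open I (U j)) ->
        open I (\bigcap_j U j)) <-> small K [set: J].
Proof.
split; last first.
  by move=> sJ U oU; apply: bigcap_open => // j _; apply: oU.
move=> h; apply: contrapT => /contrapT le.
have [k0 _] := infinite_setN0 Kinf.
have [e [_ einj]] := inj_of_le le (ex_intro _ k0 Logic.I).
pose c : K -> V := fun _ => v0.
pose U j := [set x : K -> V | forall k, e k = j -> x k = c k].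
have oU j : open I (U j).
  apply/open_char => x hx; exists [set k | e k = j]; split.
    case: (pselect (exists k, e k = j)) => [[k1 ek1]|nk].
      apply: Isub (Ising k1) _ => k /= ekj.
      by apply: einj => //; rewrite ekj ek1.
    by apply: Isub I0 _ => k /= ekj; apply: nk; exists k.
  by move=> z hz k ekj; rewrite hz //; apply: hx.
have := h U oU.
have -> : \bigcap_j U j = [set c].
  apply/seteqP; split => x.
    by move=> hx; apply: funext => k; apply: (hx (e k)).
  by move=> -> j _ k.
by apply: perfect_.
Qed.

Lemma clopen_compl (U : set (K -> V)) : clopen I U -> clopen I (~` U).
Proof. by move=> [oU cU]; split => //; rewrite /Defs.closed setCK. Qed.

Lemma clopen_union (F : set (set (K -> V))) : small K F -> F `<=` clopen I ->
  clopen I (\bigcup_(U in F) U).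
Proof.
move=> sF Fc; split.
  apply/open_char => x [W FW Wx].
  have [D [ID s]] := proj1 (open_char _) (proj1 (Fc W FW)) x Wx.
  by exists D; split => // z /s Wz; exists W.
rewrite /Defs.closed setC_bigcup; apply: bigcap_open => // W FW.
exact: (proj2 (Fc W FW)).
Qed.

Lemma nbhd_lower (x : K -> V) B : nbhd_basis I x B -> [set: K] #<= B.
Proof.
move=> [Bop Bb]; apply: contrapT => sB.
have hD : forall W, exists D, B W -> I D /\ N D x `<=` W.
  move=> W; case: (pselect (B W)) => BW; last by exists set0.
  have [oW Wx] := Bop W BW.
  by have [D hD] := proj1 (open_char _) oW x Wx; exists D.
have [DW hDW] := choice hD.
have IE : I (\bigcup_(W in B) DW W).
  by apply: Iunion_small => // W BW; case: (hDW W BW).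
have [k nEk] := exists_out IE.
have IE' : I (\bigcup_(W in B) DW W `|` [set k]) by apply: IU.
have [W BW sW] := Bb _ (open_N x IE') (@N_self _ _).
have [_ s] := hDW W BW.
have nDk : ~ DW W k by move=> h; apply: nEk; exists W.
have := sW _ (s _ (upd_N x nDk)) k (or_intror erefl).
by rewrite upd_at; apply: oth_neq.
Qed.

Lemma part3b :
  (forall x : K -> V, exists B, nbhd_basis I x B /\ B #= [set: K]) <->
   (exists B, ideal_basis I B /\ B #= [set: K]).
Proof.
split.
  move=> h; pose x0 : K -> V := fun _ => v0.
  have [B [[Bop Bb] BK]] := h x0.
  have hD : forall W, exists D, B W -> I D /\ N D x0 `<=` W.
    move=> W; case: (pselect (B W)) => BW; last by exists set0.
    have [oW Wx] := Bop W BW.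
    by have [D hD] := proj1 (open_char _) oW x0 Wx; exists D.
  have [DW hDW] := choice hD.
  exists (DW @` B); split.
    split; first by move=> A [W BW <-]; case: (hDW W BW).
    move=> A IA.
    have [W BW sW] := Bb _ (open_N x0 IA) (@N_self _ _).
    exists (DW W); first by exists W.
    have [_ s] := hDW W BW.
    by apply: (N_sub_inv (x := x0)) => z /s /sW.
  apply: Cantor_Bernstein.
    apply: card_le_trans (card_image_le _ _) _.
    by case/card_eqPle: BK.
  apply: contrapT => sC.
  apply: Iprop; apply: Isub (Hc sC _) _.
    by move=> A [W BW <-]; case: (hDW W BW).
  move=> k _.
  have [W BW sW] := Bb _ (open_N x0 (Ising k)) (@N_self _ _).
  have [_ s] := hDW W BW.
  exists (DW W); first by exists W.
  by apply: (N_sub_inv (x := x0) (A := [set k])) => [z /s /sW|].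
move=> [B [[BI Bc] BK]] x.
exists ((fun D => N D x) @` B); split.
  split.
    by move=> W [D BD <-]; split => //; apply: open_N; apply: BI.
  move=> U oU Ux.
  have [D [ID s]] := proj1 (open_char _) oU x Ux.
  have [C BC DC] := Bc D ID.
  exists (N C x); first by exists C.
  by move=> z /(N_mono DC) /s.
apply: Cantor_Bernstein.
  apply: card_le_trans (card_image_le _ _) _.
  by case/card_eqPle: BK.
apply: (@nbhd_lower x).
split.
  by move=> W [D BD <-]; split => //; apply: open_N; apply: BI.
move=> U oU Ux.
have [D [ID s]] := proj1 (open_char _) oU x Ux.
have [C BC DC] := Bc D ID.
exists (N C x); first by exists C.
by move=> z /(N_mono DC) /s.
Qed.

Section Unb.
Variable A : set K.
Hypothesis IA : I A.
Hypothesis Aub : ~ bounded lt A.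

Let KA : [set: K] #<= A.
Proof. by apply: contrapT => sA; apply: Aub; case: Hk => _ [reg _]; apply: reg. Qed.

Let k0 : K. Proof. by have /cid [k _] := infinite_setN0 Kinf; exact: k. Qed.

Let eP : exists e : K -> K, (forall k, A (e k)) /\ (forall k k', e k = e k' -> k = k').
Proof.
have [e [eA einj]] := inj_of_le KA (ex_intro _ k0 Logic.I).
by exists e; split => [k|k k']; [apply: eA|apply: einj].
Qed.

Let e : K -> K := projT1 (cid eP).
Let eA : forall k, A (e k). Proof. by case: (projT2 (cid eP)). Qed.
Let einj : forall k k', e k = e k' -> k = k'. Proof. by case: (projT2 (cid eP)). Qed.

Definition xS (S : set K) : K -> V :=
  fun j => if pselect (exists k, S k /\ e k = j) is left _ then v1 else v0.

Lemma xS_in S k : S k -> xS S (e k) = v1.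
Proof. by move=> Sk; rewrite /xS; case: pselect => // -[]; exists k. Qed.

Lemma xS_out S k : ~ S k -> xS S (e k) = v0.
Proof.
move=> nSk; rewrite /xS; case: pselect => // -[k' [Sk' /einj ek]].
by exfalso; apply: nSk; rewrite -ek.
Qed.

Lemma xS_inj S T : N A (xS T) (xS S) -> S = T.
Proof.
move=> h; apply: funext => k; apply: propext.
have := h (e k) (eA k).
case: (pselect (S k)) => Sk; case: (pselect (T k)) => Tk.
- by [].
- by rewrite xS_in // xS_out // => /esym /v01.
- by rewrite xS_out // xS_in // => /v01.
- by [].
Qed.

Lemma part4 : ~ compact_space V I /\ ~ kappa_compact V I.
Proof.
pose F := [set W : set (K -> V) | exists x, W = N A x].
have cov : open_cover I F.
  split; first by move=> W [x ->]; apply: open_N.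
  by apply/seteqP; split => // x _; exists (N A x) => //; exists x.
have key G : G `<=` F -> \bigcup_(U in G) U = [set: K -> V] -> [set: K] #<= G.
  move=> GF GT.
  apply: (@le_of_inj _ _ _ _ (fun k => N A (xS [set k]))).
    move=> k _.
    have : (\bigcup_(U in G) U) (xS [set k]) by rewrite GT.
    case=> W GW Wx; have [y Wy] := GF W GW.
    by rewrite (N_eq (y := y)) -?Wy.
  move=> k k' _ _ E.
  have : N A (xS [set k']) (xS [set k]) by rewrite -E.
  by move=> /xS_inj E'; have : [set k'] k by rewrite -E'.
have nk : ~ kappa_compact V I.
  by move=> h; have [G GF [sG GT]] := h F cov; apply: sG; apply: key.
split => // h; have [G GF [fG GT]] := h F cov.
have := key G GF GT => le; apply: Kinf; exact: card_le_finite le fG.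
Qed.

Lemma basis_lower (B : set (set (K -> V))) : open_basis I B -> [set: set K] #<= B.
Proof.
move=> [Bop Bb].
have hW : forall S, exists W, B W /\ W (xS S) /\ W `<=` N A (xS S).
  move=> S; have [W BW [Wx WN]] := Bb _ (xS S) (open_N (xS S) IA) (@N_self _ _).
  by exists W.
have [W hW'] := choice hW.
apply: (@le_of_inj _ _ _ _ W); first by move=> S _; case: (hW' S).
move=> S T _ _ E.
have [_ [WS _]] := hW' S; have [_ [_ WT]] := hW' T.
by apply: xS_inj; apply: WT; rewrite -E.
Qed.

Hypothesis HV : [set: K -> V] #<= [set: set K].
Hypothesis setK2 : [set: set K * set K] #<= [set: set K].

Lemma basis_exists : exists B : set (set (K -> V)), open_basis I B /\ B #= [set: set K].
Proof.
have ob : open_basis I ((@subbase K V I)).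
  split; first by move=> W [D [g [ID ->]]]; apply: open_N.
  move=> U x oU Ux.
  have [D [ID s]] := proj1 (open_char _) oU x Ux.
  by exists (N D x) => //; exists D, x.
exists ((@subbase K V I)); split => //.
apply: Cantor_Bernstein; last exact: basis_lower.
have hr : forall W, exists p : set K * (K -> V), (@subbase K V I) W -> W = N p.1 p.2.
  move=> W; case: (pselect ((@subbase K V I) W)) => [[D [g [_ ->]]]|n].
    by exists (D, g).
  by exists (set0, fun _ => v0).
have [r hr'] := choice hr.
apply: (@card_le_trans _ _ _ [set: set K * (K -> V)]).
  apply: (@le_of_inj _ _ _ _ r) => // W W' hW hW' E.
  by rewrite (hr' W hW) (hr' W' hW') E.
apply: card_le_trans setK2.
exact: card_leX.
Qed.

Lemma opens_card : [set U : set (K -> V) | open I U] #= [set: set (set K)].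
Proof.
apply: Cantor_Bernstein.
  apply: card_le_trans (card_leT _) _.
  exact: card_le_setT.
apply: (@le_of_inj _ _ _ _ (fun SS : set (set K) => \bigcup_(S in SS) N A (xS S))).
  move=> SS _; apply/open_char => x [S SSS hx].
  exists A; split => // z hz; exists S => //.
  by rewrite -(N_eq hx).
move=> SS TT _ _ E.
have sub : forall SS TT : set (set K),
    \bigcup_(S in SS) N A (xS S) = \bigcup_(S in TT) N A (xS S) -> SS `<=` TT.
  move=> S1 T1 E1 S S1S.
  have : (\bigcup_(S in T1) N A (xS S)) (xS S) by rewrite -E1; exists S.
  by case=> T T1T /xS_inj ->.
by apply/seteqP; split; apply: sub.
Qed.

Lemma dense_part : (exists D : set (K -> V), dense I D /\ D #= [set: set K]) /\
     (forall D : set (K -> V), dense I D -> [set: set K] #<= D).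
Proof.
split.
  exists [set: K -> V]; split.
    by move=> U _ [x Ux]; exists x.
  apply: Cantor_Bernstein => //.
  apply: (@le_of_inj _ _ _ _ xS) => // S T _ _ E.
  by apply: xS_inj; rewrite E.
move=> D dD.
have hd : forall S, exists d, (N A (xS S) `&` D) d.
  by move=> S; apply: dD; [apply: open_N|exists (xS S)].
have [dS hdS] := choice hd.
apply: (@le_of_inj _ _ _ _ dS); first by move=> S _; case: (hdS S).
move=> S T _ _ E.
have [h1 _] := hdS S; have [h2 _] := hdS T.
apply: xS_inj.
rewrite -(N_eq h2) -E (N_eq h1); exact: N_self.
Qed.

End Unb.

Lemma main_topo (HV : [set: K -> V] #<= [set: set K])
  (setK2 : [set: set K * set K] #<= [set: set K]) :
  [/\ perfect V I, hausdorff V I, regular_space V I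
    & zero_dimensional V I] /\
  (forall J : Type,
     (forall U : J -> set (K -> V), (forall j, open I (U j)) ->
        open I (\bigcap_j U j))
     <-> small K [set: J]) /\
  (forall U : set (K -> V), clopen I U -> clopen I (~` U)) /\
  (forall F : set (set (K -> V)), small K F -> F `<=` clopen I ->
     clopen I (\bigcup_(U in F) U)) /\
  (forall (x : K -> V) B, nbhd_basis I x B -> [set: K] #<= B) /\
  ((forall x : K -> V, exists B, nbhd_basis I x B /\ B #= [set: K]) <->
   (exists B, ideal_basis I B /\ B #= [set: K])) /\
  ((exists A, I A /\ ~ bounded lt A) ->
    (~ compact_space V I /\ ~ kappa_compact V I) /\
    ((exists B : set (set (K -> V)), open_basis I B /\ B #= [set: set K]) /\
     (forall B : set (set (K -> V)), open_basis I B -> [set: set K] #<= B)) /\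
    [set U : set (K -> V) | open I U] #= [set: set (set K)] /\
    ((exists D : set (K -> V), dense I D /\ D #= [set: set K]) /\
     (forall D : set (K -> V), dense I D -> [set: set K] #<= D))).
Proof.
split; first by split; [exact: perfect_|exact: hausdorff_|exact: regular_|exact: zero_dim_].
split; first by move=> J; exact: part2.
split; first exact: clopen_compl.
split; first exact: clopen_union.
split; first exact: nbhd_lower.
split; first exact: part3b.
move=> [A [IA Aub]].
split; first exact: (part4 IA Aub).
split; first split.
- exact: (basis_exists IA Aub HV setK2).
- exact: (basis_lower IA Aub).
split; first exact: (opens_card IA Aub HV).
exact: (dense_part IA Aub HV).
Qed.

End Topo.

Lemma funbool_le {K} : [set: K -> bool] #<= [set: set K].
Proof.
apply: (@le_of_inj _ _ _ _ (fun g : K -> bool => [set k | g k = true])) => // g g' _ _ E.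
apply: funext => k.
have := congr1 (fun S => S k) E => /= /(congr1 (fun P : Prop => P)).
case: (g k); case: (g' k) => // h.
- by have : false = true by rewrite -h.
- by have : false = true by rewrite h.
Qed.

Lemma funK_le {K} : [set: K * K] #<= [set: K] -> [set: K -> K] #<= [set: set K].
Proof.
move=> HK; apply: card_le_trans (card_le_setT HK).
apply: (@le_of_inj _ _ _ _ (fun g : K -> K => [set p | p.2 = g p.1])) => // g g' _ _ E.
apply: funext => k.
have : [set p : K * K | p.2 = g' p.1] (k, g k) by rewrite -E.
by [].
Qed.

Unset Implicit Arguments. Set Strict Implicit.

Theorem lemma2p5 (K : Type) (lt : K -> K -> Prop) (V : Type)
    (I : set (set K)) :
  uncountable_regular_cardinal lt ->
  proper_ideal I -> kappa_complete I -> contains_bounded lt I ->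
  (V = bool \/ V = K) ->
  (* (1) *)
  [/\ perfect V I, hausdorff V I, regular_space V I
    & zero_dimensional V I] /\
  (* (2) *)
  (forall J : Type,
     (forall U : J -> set (K -> V), (forall j, open I (U j)) ->
        open I (\bigcap_j U j))
     <-> small K [set: J]) /\
  (forall U : set (K -> V), clopen I U -> clopen I (~` U)) /\
  (forall F : set (set (K -> V)), small K F -> F `<=` clopen I ->
     clopen I (\bigcup_(U in F) U)) /\
  (* (3) *)
  (forall (x : K -> V) B, nbhd_basis I x B -> [set: K] #<= B) /\
  ((forall x : K -> V, exists B, nbhd_basis I x B /\ B #= [set: K]) <->
   (exists B, ideal_basis I B /\ B #= [set: K])) /\
  ((exists A, I A /\ ~ bounded lt A) ->
    (* (4) *)
    (~ compact_space V I /\ ~ kappa_compact V I) /\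
    (* (5) *)
    ((exists B : set (set (K -> V)), open_basis I B /\ B #= [set: set K]) /\
     (forall B : set (set (K -> V)), open_basis I B -> [set: set K] #<= B)) /\
    [set U : set (K -> V) | open I U] #= [set: set (set K)] /\
    (* (6) *)
    ((exists D : set (K -> V), dense I D /\ D #= [set: set K]) /\
     (forall D : set (K -> V), dense I D -> [set: set K] #<= D))).
Proof.
move=> Hk HI Hc Hb HV.
have Kinf : infinite_set [set: K].
  by case: Hk => _ [_ unc] fin; apply: unc; apply: finite_set_countable.
have [k0 [k1 k01]] : exists k0 k1 : K, k0 <> k1.
  have [e [_ einj]] := inj_of_le (proj1 (infiniteP _) Kinf) (ex_intro _ 0%N Logic.I).
  by exists (e 0%N), (e 1%N) => /(einj _ _ Logic.I Logic.I).
have HK : [set: K * K] #<= [set: K].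
  case: Hk => -[wo init] _; apply: (hessenberg k0 wo _ Kinf).
  by move=> i; apply: init.
have KbK : [set: K * bool] #<= [set: K].
  apply: card_le_trans HK.
  apply: (@le_of_inj _ _ _ _ (fun p : K * bool => (p.1, if p.2 then k1 else k0))) => //.
  move=> [a b] [a' b'] _ _ /= [-> ].
  by case: b; case: b' => // /esym.
have setK2 := card_le_trans card_pair_set (card_le_setT KbK).
case: HV => HV; subst V.
- exact: (main_topo Hk HI Hc Hb (v0 := false) (v1 := true) _ funbool_le setK2).
- exact: (main_topo Hk HI Hc Hb k01 (funK_le HK) setK2).
Qed.
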